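(* Let $G$ be a finite group and $U,V\leq G\times G$ with $\Delta(G)\leq U$ and $\Delta(G)\leq V$. Suppose that $U$ and $V$ are extensible. Then $U\ast V$ is extensible if and only if $k_i(U\ast V)\cap G'=(k_i(U)\cap G')(k_i(V)\cap G')$ for $i\in\{1,2\}$.
   Context: $\Delta(G)=\{(g,g):g\in G\}$; $G'$ is the commutator subgroup. For $W\leq G\times G$: $p_1(W)=\{g:\exists h,(g,h)\in W\}$, $p_2(W)=\{h:\exists g,(g,h)\in W\}$, $k_1(W)=\{g:(g,1)\in W\}$, $k_2(W)=\{h:(1,h)\in W\}$. The $\ast$-product is $U\ast V=\{(u,v)\in p_1(U)\times p_2(V):\exists x\in p_2(U)\cap p_1(V),\ (u,x)\in U,\ (x,v)\in V\}$. An abelian group $A$ satisfies the Hypothesis (with set of primes $\pi$) if there is a unique set of primes $\pi$ such that for every $n\in\mathbb{N}$ the $n$-torsion part of $A$ is cyclic of order $n_\pi$ (the $\pi$-part of $n$). A subgroup $W\leq G\times G$ with $p_1(W)=p_2(W)=G$ is $A$-extensible if every homomorphism $W\to A$ extends to a homomorphism $G\times G\to A$, and extensible if it is $A$-extensible for every abelian group $A$ satisfying the Hypothesis. *)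

(* Defs.v *)
From HB Require Import structures.
From mathcomp Require Import all_boot all_order all_algebra all_fingroup all_solvable.
Set Implicit Arguments. Unset Strict Implicit. Unset Printing Implicit Defensive.
Import GRing.Theory.

Local Open Scope group_scope.

Section Defs.
Variable gT : finGroupType.
Implicit Types (G : {set gT}) (W U V : {set gT * gT}).

Definition diagG G : {set gT * gT} := [set (g, g) | g in G].

Definition p1 W : {set gT} := [set x.1 | x in W].
Definition p2 W : {set gT} := [set x.2 | x in W].
Definition k1 W : {set gT} := [set g | (g, 1) \in W].
Definition k2 W : {set gT} := [set h | (1, h) \in W].

Definition starp U V : {set gT * gT} :=
  [set uv in setX (p1 U) (p2 V) |
     [exists x in p2 U :&: p1 V, ((uv.1, x) \in U) && ((x, uv.2) \in V)]].

End Defs.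

Definition torsion_cyclic_of_order (A : zmodType) (n m : nat) : Prop :=
  exists g : A,
    (g *+ n = 0)%R /\
    (forall a : A, (a *+ n = 0)%R -> exists k : nat, a = (g *+ k)%R) /\
    (g *+ m = 0)%R /\ (forall k : nat, (0 < k < m)%N -> (g *+ k != 0)%R).

Definition hyp_pi (A : zmodType) (pi : nat_pred) : Prop :=
  (forall p, p \in pi -> prime p) /\
  (forall n : nat, (0 < n)%N -> torsion_cyclic_of_order A n (n`_pi)%N).

Definition Hypothesis_ab (A : zmodType) : Prop :=
  exists pi : nat_pred, hyp_pi A pi /\
    (forall pi' : nat_pred, hyp_pi A pi' -> pi' =i pi).

Definition is_hom_on (aT : finGroupType) (A : zmodType) (H : {set aT})
    (f : aT -> A) : Prop :=
  forall x y, x \in H -> y \in H -> f (x * y) = (f x + f y)%R.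

Definition A_extensible (gT : finGroupType) (A : zmodType) (G : {set gT})
    (W : {set gT * gT}) : Prop :=
  forall f : gT * gT -> A, is_hom_on W f ->
    exists F : gT * gT -> A, is_hom_on (setX G G) F /\
      (forall w, w \in W -> F w = f w).

Definition extensible (gT : finGroupType) (G : {set gT}) (W : {set gT * gT}) : Prop :=
  p1 W = G /\ p2 W = G /\
  forall A : zmodType, Hypothesis_ab A -> A_extensible A G W.

(* Main.v *)
Require Import Defs.
From HB Require Import structures.
From mathcomp Require Import all_boot all_order all_algebra all_fingroup all_solvable.
From mathcomp Require Import all_field all_character.
From mathcomp Require Import zify.
Set Implicit Arguments. Unset Strict Implicit. Unset Printing Implicit Defensive.
Import GRing.Theory.


Section Cx.
Local Open Scope ring_scope.
Definition Cx := {x : algC | x != 0}.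
HB.instance Definition _ := Choice.on Cx.
Definition cx1 : Cx := exist _ 1 (oner_neq0 _).
Definition cxmul (x y : Cx) : Cx := exist _ (val x * val y) (mulf_neq0 (valP x) (valP y)).
Definition cxinv (x : Cx) : Cx := exist _ (val x)^-1 (invr_neq0 (valP x)).
Lemma cxA : associative cxmul. Proof. by move=> x y z; apply: val_inj; rewrite /= mulrA. Qed.
Lemma cxC : commutative cxmul. Proof. by move=> x y; apply: val_inj; rewrite /= mulrC. Qed.
Lemma cx0 : left_id cx1 cxmul. Proof. by move=> x; apply: val_inj; rewrite /= mul1r. Qed.
Lemma cxN : left_inverse cx1 cxinv cxmul.
Proof. by move=> x; apply: val_inj; rewrite /= mulVf // (valP x). Qed.
HB.instance Definition _ := GRing.isZmodule.Build Cx cxA cxC cx0 cxN.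

Lemma cx_val0 : val (0 : Cx) = 1. Proof. by []. Qed.
Lemma cx_valD (x y : Cx) : val (x + y) = val x * val y. Proof. by []. Qed.
Lemma cx_valMn (x : Cx) n : val (x *+ n) = val x ^+ n.
Proof. by elim: n => [|n IH] //; rewrite mulrS exprS cx_valD IH. Qed.
Lemma cx_eq0 (x : Cx) : (x == 0) = (val x == 1).
Proof. by rewrite -val_eqE. Qed.

Definition cxof (z : algC) : Cx := insubd cx1 z.
Lemma cxofK z : z != 0 -> val (cxof z) = z.
Proof. by move=> nz; rewrite /cxof insubdK. Qed.

Definition allprimes : nat_pred := [pred p | prime p].

Lemma hyp_Cx : hyp_pi Cx allprimes.
Proof.
split=> // n n0.
have -> : (n`_allprimes)%N = n.
  by apply: part_pnat_id; apply/pnatP => // p pp _.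
have [z pz] := C_prim_root_exists n0.
have znz : z != 0.
  apply/eqP => z0; move: (prim_expr_order pz); rewrite z0 expr0n gtn_eqF //.
  by move/eqP; rewrite eq_sym oner_eq0.
exists (cxof z); rewrite /torsion_cyclic_of_order.
have hz : forall k, (cxof z *+ k == 0) = (n %| k)%N.
  by move=> k; rewrite cx_eq0 cx_valMn cxofK // (prim_order_dvd pz).
split; first by apply/eqP; rewrite hz.
split.
  move=> a /eqP; rewrite cx_eq0 cx_valMn => /eqP an.
  have [i ai] := prim_rootP pz an.
  exists i; apply: val_inj; by rewrite cx_valMn cxofK.
split; first by apply/eqP; rewrite hz.
move=> k /andP[k0 kn]; rewrite hz; apply/negP => /(dvdn_leq k0); by rewrite leqNgt kn.
Qed.

Lemma Hyp_Cx : Hypothesis_ab Cx.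
Proof.
exists allprimes; split; first exact: hyp_Cx.
move=> pi [pr tor] p; rewrite /allprimes inE.
apply/idP/idP; first exact: pr.
move=> pp; apply/negPn/negP => npi.
have p0 : (0 < p)%N by exact: prime_gt0.
have [g [gp [gall [g1 _]]]] := tor p p0.
have e1 : (p`_pi)%N = 1%N.
  apply: part_p'nat; rewrite pnatE // inE /=; exact: npi.
rewrite e1 mulr1n in g1.
have [z pz] := C_prim_root_exists p0.
have znz : z != 0.
  apply/eqP => z0; move: (prim_expr_order pz); rewrite z0 expr0n gtn_eqF //.
  by move/eqP; rewrite eq_sym oner_eq0.
have : cxof z *+ p = 0.
  by apply: val_inj; rewrite cx_valMn cxofK // (prim_expr_order pz).
move/gall=> [k] /(congr1 val); rewrite g1 mul0rn cxofK // => z1.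
have := prim_order_dvd pz 1; rewrite expr1 z1 eqxx dvdn1 => /eqP p1.
by rewrite p1 in pp.
Qed.
End Cx.


Section Div.
Local Open Scope ring_scope.
Variable A : zmodType.

Lemma mulrn_mod (g : A) (m x : nat) : g *+ m = 0 -> g *+ x = g *+ (x %% m)%N.
Proof.
move=> gm; rewrite {1}(divn_eq x m) mulrnDr mulnC mulrnA gm mul0rn add0r //.
Qed.

Lemma mulrn_eqmod (g : A) (m x x' : nat) : g *+ m = 0 -> (x = x' %[mod m])%N ->
  g *+ x = g *+ x'.
Proof. by move=> gm e; rewrite (mulrn_mod x gm) (mulrn_mod x' gm) e. Qed.

Lemma tor_order (g : A) (m : nat) : (0 < m)%N -> g *+ m = 0 ->
  (forall t, (0 < t < m)%N -> g *+ t != 0) -> forall t, g *+ t = 0 -> (m %| t)%N.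
Proof.
move=> m0 gm gmin t gt; rewrite /dvdn; apply/negPn/negP => nz.
have := gmin (t %% m)%N; rewrite lt0n nz ltn_mod m0 /= -(mulrn_mod t gm) gt eqxx.
by move/(_ isT).
Qed.

Lemma div_hyp pi : hyp_pi A pi -> forall (y : A) (e k : nat), (0 < e)%N -> (0 < k)%N ->
  y *+ e = 0 -> exists a : A, a *+ k = y.
Proof.
move=> [_ tor] y e k e0 k0 ye.
set e' := (e`_pi)%N.
have e'0 : (0 < e')%N by exact: part_gt0.
have ye' : y *+ e' = 0.
  have [ge [gee [geall [gee' _]]]] := tor e e0.
  have [j ->] := geall y ye.
  by rewrite -mulrnA mulnC mulrnA gee' mul0rn.
have n0 : (0 < k * e')%N by rewrite muln_gt0 k0.
have [g [gn [gall [gm gmin]]]] := tor _ n0.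
have epi : pi.-nat e' by exact: part_pnat.
have mE : ((k * e')`_pi = k`_pi * e')%N by rewrite partnM // (part_pnat_id epi).
rewrite mE in gm gmin.
have yn : y *+ (k * e') = 0 by rewrite mulnC mulrnA ye' mul0rn.
have [j yj] := gall y yn.
have dj : (k`_pi * e' %| j * e')%N.
  apply: (tor_order _ gm gmin); first by rewrite muln_gt0 part_gt0.
  by rewrite mulrnA -yj.
rewrite dvdn_pmul2r // in dj.
have [j' jE] := dvdnP dj.
set kq := (k`_pi^')%N.
have cop : coprime kq e'.
  by rewrite coprime_sym; apply: (pnat_coprime epi); exact: part_pnat.
have tot0 : (0 < totient e')%N by rewrite totient_gt0.
exists (g *+ (j' * kq ^ (totient e').-1)).
rewrite yj -mulrnA; apply: (mulrn_eqmod gm).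
rewrite jE.
have kE : k = (k`_pi * kq)%N by rewrite /kq partnC.
set kp := (k`_pi)%N in kE *.
rewrite {1}kE.
have -> : (j' * kq ^ (totient e').-1 * (kp * kq) = kp * (j' * kq ^ totient e'))%N.
  rewrite -(prednK tot0) expnSr.
  set P := (kq ^ _)%N.
  by rewrite !mulnA [(j' * P * kp)%N]mulnC !mulnA [(kp * j')%N]mulnC.
rewrite [(j' * kp)%N]mulnC -!muln_modr; congr (_ * _)%N.
by rewrite -modnMmr (Euler_exp_totient cop) modnMmr muln1.
Qed.
End Div.

Local Open Scope group_scope.

Section Hom.
Variables (gT : finGroupType) (A : zmodType).
Implicit Types (H : {group gT}) (f : gT -> A).

Lemma hom1 H f : is_hom_on H f -> f 1 = 0%R.
Proof.
move=> hf; have e := hf 1 1 (group1 H) (group1 H); rewrite mulg1 in e.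
by apply: (@addrI _ (f 1)); rewrite -e addr0.
Qed.

Lemma homV H f x : is_hom_on H f -> x \in H -> f x^-1 = (- f x)%R.
Proof.
move=> hf Hx; have e := hf x x^-1 Hx (groupVr Hx); rewrite mulgV (hom1 hf) in e.
by apply/eqP; rewrite -addr_eq0 addrC -e.
Qed.

Lemma homX H f x n : is_hom_on H f -> x \in H -> f (x ^+ n) = (f x *+ n)%R.
Proof.
move=> hf Hx; elim: n => [|n IH]; first by rewrite expg0 (hom1 hf) mulr0n.
by rewrite expgS hf ?groupX // IH mulrS.
Qed.

Lemma homJ H f x y : is_hom_on H f -> x \in H -> y \in H -> f (x ^ y) = f x.
Proof.
move=> hf Hx Hy; rewrite conjgE !hf ?groupM ?groupV // (homV hf) //.
by rewrite addrC -addrA subrr addr0.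
Qed.

Lemma homR H f x y : is_hom_on H f -> x \in H -> y \in H -> f [~ x, y] = 0%R.
Proof.
move=> hf Hx Hy; rewrite commgEl hf ?groupV ?groupJ // (homJ hf) // (homV hf) //.
by rewrite addNr.
Qed.

Lemma hom_ker H f (S : {set gT}) : is_hom_on H f -> S \subset H ->
  {in S, forall x, f x = 0%R} -> {in <<S>>, forall x, f x = 0%R}.
Proof.
move=> hf sSH fS.
have gK : group_set [set x in H | f x == 0%R].
  apply/group_setP; split; first by rewrite inE group1 (hom1 hf) eqxx.
  move=> x y; rewrite !inE => /andP[Hx /eqP fx] /andP[Hy /eqP fy].
  by rewrite groupM // hf // fx fy addr0 eqxx.
have: <<S>> \subset Group gK.
  rewrite gen_subG; apply/subsetP => x Sx; rewrite inE (subsetP sSH) //=.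
  by rewrite fS.
by move/subsetP => sub x /sub; rewrite inE => /andP[_ /eqP].
Qed.

Lemma hom_der (G : {group gT}) f : is_hom_on G f -> {in G^`(1), forall x, f x = 0%R}.
Proof.
move=> hf; apply: (hom_ker hf).
  by apply/subsetP => _ /imset2P[x y Gx Gy ->]; rewrite groupR.
by move=> _ /imset2P[x y Gx Gy ->]; rewrite (homR hf).
Qed.
End Hom.


Section Ext.
Variables (gT : finGroupType) (A : zmodType) (pi : nat_pred) (hA : hyp_pi A pi).
Implicit Types (H : {group gT}) (f : gT -> A).

Lemma ext_step (G H : {group gT}) f c :
  H \subset G -> G^`(1) \subset H -> is_hom_on H f ->
  {in G^`(1), forall x, f x = 0%R} -> c \in G ->
  exists f1, is_hom_on (H <*> <[c]>) f1 /\ {in H, forall x, f1 x = f x}.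
Proof.
move=> sHG sG'H hf fG' Gc.
have nHG : G \subset 'N(H) := sub_der1_norm sG'H sHG.
have ex : exists k, (0 < k)%N && (c ^+ k \in H).
  by exists #[c]; rewrite order_gt0 expg_order group1.
case: (ex_minnP ex) => k /andP[k0 Hck] kmin.
have divk : forall t, c ^+ t \in H -> (k %| t)%N.
  move=> t Hct; rewrite /dvdn; apply/negPn/negP => nz.
  have e : c ^+ (t %% k) = ((c ^+ k) ^+ (t %/ k))^-1 * c ^+ t.
    by rewrite [in c ^+ t](divn_eq t k) expgD mulnC expgM mulKg.
  have Hr : c ^+ (t %% k) \in H by rewrite e groupM // groupV groupX.
  by have := kmin (t %% k)%N; rewrite lt0n nz Hr /= => /(_ isT); rewrite leqNgt ltn_mod k0.
set y := f (c ^+ k).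
have ye : (y *+ #|H| = 0)%R by rewrite -(homX _ hf) // expg_cardG // (hom1 hf).
have [a ha] := div_hyp hA (cardG_gt0 H) k0 ye.
have indep : forall x i j, x * (c ^+ i)^-1 \in H -> x * (c ^+ j)^-1 \in H ->
    (f (x * (c ^+ i)^-1)%g + a *+ i = f (x * (c ^+ j)^-1)%g + a *+ j)%R.
  move=> x i j; wlog le_ij : i j / (i <= j)%N.
    move=> W Hi Hj; case: (leqP i j) => [le|/ltnW le]; first exact: W.
    by symmetry; exact: W.
  move=> Hi Hj; set d := (j - i)%N.
  have ej : c ^+ j = c ^+ d * c ^+ i by rewrite -expgD /d subnK.
  have ed : c ^+ d = (x * (c ^+ j)^-1)^-1 * (x * (c ^+ i)^-1).
    by rewrite invMg invgK mulgA mulgKV ej mulgK.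
  have Hd : c ^+ d \in H by rewrite ed groupM ?groupV.
  have [q dq] := dvdnP (divk _ Hd).
  have ex' : x * (c ^+ i)^-1 = (x * (c ^+ j)^-1) * c ^+ d.
    by rewrite ej invMg !mulgA mulgKV.
  rewrite ex' hf // -/d.
  have -> : f (c ^+ d) = (a *+ d)%R.
    by rewrite dq mulnC expgM (homX _ hf) // -/y -ha -mulrnA.
  by rewrite -addrA -mulrnDr /d subnK.
pose idx x : nat := if [pick i : 'I_#[c] | x * (c ^+ i)^-1 \in H] is Some i then i else 0%N.
pose f1 x := (f (x * (c ^+ idx x)^-1)%g + a *+ idx x)%R.
have nHc : <[c]> \subset 'N(H) by rewrite cycle_subG (subsetP nHG).
have idxP : forall x, x \in H <*> <[c]> -> x * (c ^+ idx x)^-1 \in H.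
  move=> x; rewrite /idx; case: pickP => [i //|none].
  rewrite norm_joinEr // => /mulsgP[h z Hh /cyclePmin[i lti ez] exz].
  by have := none (Ordinal lti); rewrite /= exz ez mulgK Hh.
exists f1; split.
  move=> x z Hx Hz.
  have Hx' := idxP _ Hx; have Hz' := idxP _ Hz.
  set i := idx x in Hx'; set j := idx z in Hz'.
  have hxz : x * z * (c ^+ (i + j))^-1 = (x * (c ^+ i)^-1) * (z * (c ^+ j)^-1) ^ (c ^+ i)^-1.
    by rewrite conjgE invgK expgD invMg !mulgA mulgKV.
  have Gci : (c ^+ i)^-1 \in G by rewrite groupV groupX.
  have Hzc : (z * (c ^+ j)^-1) ^ (c ^+ i)^-1 \in H by rewrite memJ_norm // (subsetP nHG).
  have Hxz : x * z * (c ^+ (i + j))^-1 \in H by rewrite hxz groupM.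
  rewrite /f1 (indep _ _ _ (idxP _ (groupM Hx Hz)) Hxz) hxz hf //.
  have -> : f ((z * (c ^+ j)^-1) ^ (c ^+ i)^-1) = f (z * (c ^+ j)^-1).
    have cG' : [~ z * (c ^+ j)^-1, (c ^+ i)^-1] \in G^`(1).
      by rewrite derg1; apply: mem_commg => //; exact: (subsetP sHG).
    by rewrite conjg_mulR (hf _ _ Hz') ?(subsetP sG'H) // (fG' _ cG') addr0.
  by rewrite -/i -/j mulrnDr addrACA.
move=> x Hx; rewrite /f1 (indep x _ 0%N (idxP _ (subsetP (joing_subl H <[c]>) x Hx))).
  by rewrite expg0 invg1 mulg1 addr0.
by rewrite expg0 invg1 mulg1.
Qed.

Lemma ext_der (G : {group gT}) : forall n (H : {group gT}) f, (#|G| - #|H| < n)%N ->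
  H \subset G -> G^`(1) \subset H -> is_hom_on H f ->
  {in G^`(1), forall x, f x = 0%R} ->
  exists F, is_hom_on G F /\ {in H, forall x, F x = f x}.
Proof.
elim=> [//|n IH] H f lt sHG sG'H hf fG'.
case: (boolP (G \subset H)) => [sGH|].
  have eGH : G :=: H by apply/eqP; rewrite eqEsubset sGH sHG.
  by exists f; split => //; rewrite eGH.
case/subsetPn => c Gc nHc.
have [f1 [hf1 f1H]] := ext_step sHG sG'H hf fG' Gc.
set H1 := (H <*> <[c]>)%G.
have sHH1 : H \subset H1 by exact: joing_subl.
have sH1G : H1 \subset G by rewrite join_subG sHG cycle_subG.
have pHH1 : H \proper H1.
  by rewrite properEneq sHH1 andbT; apply/eqP => e; move/negP: nHc; apply; rewrite e /= mem_gen // inE cycle_id orbT.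
have lt1 : (#|G| - #|H1| < n)%N.
  have := proper_card pHH1; have := subset_leq_card sH1G; move: lt.
  move: #|G| #|H| #|H1| => a b d; lia.
have [F [hF FH1]] := IH H1 f1 lt1 sH1G (subset_trans sG'H sHH1) hf1
  (fun x xG => etrans (f1H x (subsetP sG'H x xG)) (fG' x xG)).
exists F; split => // x Hx; rewrite FH1 ?f1H //; exact: (subsetP sHH1).
Qed.

Lemma ext_gen (G H : {group gT}) f : H \subset G -> is_hom_on H f ->
  {in H :&: G^`(1), forall x, f x = 0%R} ->
  exists F, is_hom_on G F /\ {in H, forall x, F x = f x}.
Proof.
move=> sHG hf fHG'.
have nG'G : G \subset 'N(G^`(1)) by apply: normsR; exact: normG.
have nG'H : H \subset 'N(G^`(1)) := subset_trans sHG nG'G.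
pose hx x := odflt 1 [pick h in H | x * h^-1 \in G^`(1)].
have wd : forall x h h', h \in H -> h' \in H -> x * h^-1 \in G^`(1) -> x * h'^-1 \in G^`(1) ->
    f h = f h'.
  move=> x h h' Hh Hh' xh xh'.
  have e : h' * h^-1 = (x * h'^-1)^-1 * (x * h^-1) by rewrite invMg invgK mulgA mulgKV.
  have z : f (h' * h^-1) = 0%R by apply: fHG'; rewrite inE groupM ?groupV //= e groupM ?groupV.
  rewrite hf ?groupV // (homV hf) // in z.
  by apply/eqP; rewrite eq_sym -subr_eq0 z.
have hxP : forall x, x \in G^`(1) <*> H -> hx x \in H /\ x * (hx x)^-1 \in G^`(1).
  move=> x; rewrite /hx; case: pickP => [h /andP[Hh xh] //|none].
  rewrite norm_joinEr // => /mulsgP[d h Gd Hh exd].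
  by have := none h; rewrite Hh exd mulgK Gd.
pose f2 x := f (hx x).
have hf2 : is_hom_on (G^`(1) <*> H) f2.
  move=> x y Hx Hy; have [Hhx xh] := hxP x Hx; have [Hhy yh] := hxP y Hy.
  have [Hhxy xyh] := hxP _ (groupM Hx Hy).
  rewrite /f2 -hf //; apply: (wd (x * y)) => //; first by rewrite groupM.
  have -> : x * y * (hx x * hx y)^-1 = (x * (hx x)^-1) * (y * (hx y)^-1) ^ (hx x)^-1.
    by rewrite conjgE invgK invMg !mulgA mulgKV.
  rewrite groupM // memJ_norm // groupV; exact: (subsetP nG'H).
have sH2G : G^`(1) <*> H \subset G by rewrite join_subG der_sub sHG.
have f2H : {in H, forall x, f2 x = f x}.
  move=> x Hx; have [Hh xh] := hxP x (subsetP (joing_subr _ _) x Hx).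
  by apply: (wd x) => //; rewrite mulgV group1.
have f2G' : {in G^`(1), forall x, f2 x = 0%R}.
  move=> x Gx; have [Hh xh] := hxP x (subsetP (joing_subl _ _) x Gx).
  by rewrite /f2 (wd x _ 1) ?group1 ?invg1 ?mulg1 // (hom1 hf).
have [F [hF FH2]] := ext_der (ltnSn _) sH2G (joing_subl _ _) hf2 f2G'.
exists F; split => // x Hx; rewrite FH2 ?f2H //; exact: (subsetP (joing_subr _ _)).
Qed.
End Ext.


Section WN.
Variable gT : finGroupType.

Lemma pairM (a b c d : gT) : (a, b) * (c, d) = (a * c, b * d). Proof. by []. Qed.
Lemma pairV (a b : gT) : (a, b)^-1 = (a^-1, b^-1). Proof. by []. Qed.
Lemma pair1 : (1 : gT * gT) = (1, 1). Proof. by []. Qed.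

Definition Wset (G N : {set gT}) : {set gT * gT} :=
  [set xy | [&& xy.1 \in G, xy.2 \in G & xy.1 * xy.2^-1 \in N]].

Variables (G N : {group gT}) (sNG : N \subset G) (nNG : G \subset 'N(N)).

Lemma Wgroup : group_set (Wset G N).
Proof.
apply/group_setP; split; first by rewrite inE /= !group1 invg1 mulg1 group1.
move=> [x1 y1] [x2 y2]; rewrite !inE /= => /and3P[Gx1 Gy1 N1] /and3P[Gx2 Gy2 N2].
rewrite (groupM Gx1 Gx2) (groupM Gy1 Gy2) /=.
have -> : x1 * x2 * (y1 * y2)^-1 = (x1 * y1^-1) * (x2 * y2^-1) ^ y1^-1.
  by rewrite conjgE invgK invMg !mulgA mulgKV.
by rewrite groupM // memJ_norm // (subsetP nNG) // groupV.
Qed.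

Definition WN := Group Wgroup.

Lemma memW x y : ((x, y) \in WN) = [&& x \in G, y \in G & x * y^-1 \in N].
Proof. by rewrite inE. Qed.

Lemma p1W : p1 WN = G.
Proof.
apply/setP => g; apply/imsetP/idP => [[[x y] xyW ->]|Gg]; first by move: xyW; rewrite memW => /and3P[].
by exists (g, g) => //; rewrite memW Gg mulgV group1.
Qed.

Lemma p2W : p2 WN = G.
Proof.
apply/setP => g; apply/imsetP/idP => [[[x y] xyW ->]|Gg]; first by move: xyW; rewrite memW => /and3P[].
by exists (g, g) => //; rewrite memW Gg mulgV group1.
Qed.

Lemma k1W : k1 WN = N.
Proof.
apply/setP => g; rewrite inE memW group1 invg1 mulg1 /=.
by case Ng: (g \in N); rewrite ?andbT ?andbF // (subsetP sNG).
Qed.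

Lemma k2W : k2 WN = N.
Proof.
apply/setP => g; rewrite inE memW group1 mul1g groupV /=.
by case Ng: (g \in N); rewrite ?andbT ?andbF // (subsetP sNG).
Qed.

Lemma E2 : N :&: G^`(1) \subset [~: N, G] ->
  forall A : zmodType, Hypothesis_ab A -> A_extensible A G WN.
Proof.
move=> sub A [pi [hpi _]] f hf.
pose phi g := f (g, g); pose psi n := f (n, 1).
have WN1 : forall n, n \in N -> (n, 1) \in WN.
  by move=> n Nn; rewrite memW invg1 mulg1 Nn group1 (subsetP sNG).
have WGG : forall g, g \in G -> (g, g) \in WN.
  by move=> g Gg; rewrite memW Gg mulgV group1.
have hpsi : is_hom_on N psi.
  move=> x y Nx Ny; rewrite /psi.
  have -> : (x * y, 1) = (x, 1) * (y, 1) :> gT * gT by rewrite -[RHS]/(x * y, 1 * 1) mulg1.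
  by rewrite hf ?WN1.
have hphi : is_hom_on G phi.
  by move=> x y Gx Gy; rewrite /phi -[(x * y, x * y)]/((x, x) * (y, y)) hf ?WGG.
have sRN : [~: N, G] \subset N by rewrite commg_subl.
have psiR : {in [~: N, G], forall x, psi x = 0%R}.
  apply: (hom_ker hpsi).
    by apply/subsetP => _ /imset2P[x y Nx Gy ->]; rewrite (subsetP sRN) // mem_commg.
  move=> _ /imset2P[x y Nx Gy ->].
  have := homR hf (WN1 _ Nx) (WGG _ Gy).
  by rewrite /psi; have -> : [~ (x, 1), (y, y)] = ([~ x, y], [~ 1, y]) by []; rewrite comm1g.
have psiK : {in N :&: G^`(1), forall x, psi x = 0%R}.
  by move=> x xin; apply: psiR; exact: (subsetP sub).
have [al [hal alN]] := ext_gen hpi sNG hpsi psiK.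
exists (fun xy => al xy.1 - al xy.2 + phi xy.2)%R; split.
  move=> [x1 y1] [x2 y2]; rewrite !in_setX /= => /andP[Gx1 Gy1] /andP[Gx2 Gy2].
  rewrite !hal // hphi // opprD.
  by rewrite (addrACA (al x1)) [LHS]addrACA.
move=> [x y]; rewrite memW /= => /and3P[Gx Gy Nxy].
have ex : x = (x * y^-1) * y by rewrite mulgKV.
have aK : forall u v : A, (u + v - v = u)%R by move=> u v; exact: addrK.
rewrite {1}ex (hal _ _ (subsetP sNG _ Nxy) Gy) aK alN //.
have -> : (x, y) = (x * y^-1, 1) * (y, y) :> gT * gT by rewrite -[RHS]/(x * y^-1 * y, 1 * y) mul1g -ex.
by rewrite hf ?WN1 ?WGG.
Qed.

Lemma E1 : A_extensible Cx G WN -> N :&: G^`(1) \subset [~: N, G].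
Proof.
move=> ext; apply/subsetP => n /setIP[Nn G'n].
apply/negPn/negP => nK.
pose K := [~: N, G]%G.
have nKG : G \subset 'N(K) by apply: normsR => //; exact: normG.
have nKN : N \subset 'N(K) := subset_trans sNG nKG.
pose Q := (N / K)%G.
have abQ : abelian Q by apply: sub_der1_abelian; rewrite derg1 commgS.
have Qn : coset K n \in Q by rewrite mem_quotient.
have n1 : coset K n != 1.
  by apply: contraNneq nK => e; exact: coset_idr (subsetP nKN n Nn) e.
move/char_abelianP: abQ => linQ.
have [i chin] : exists i : Iirr Q, ('chi_i)%R (coset K n) != 1%R.
  case: (pickP (fun i : Iirr Q => ('chi_i)%R (coset K n) != 1%R)) => [i ci|none]; first by exists i.
  have : coset K n \in \bigcap_i cfker ('chi[Q]_i)%R.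
    apply/bigcapP => i _; rewrite cfkerEirr inE (lin_char1 (linQ i)).
    by have := none i => /negbFE.
  by rewrite TI_cfker_irr inE (negbTE n1).
pose chi := ('chi[Q]_i)%R.
have lin : chi \is a linear_char := linQ i.
pose psi m := cxof (chi (coset K m)).
have psiV : forall m, m \in N -> val (psi m) = chi (coset K m).
  by move=> m Nm; rewrite cxofK // (lin_char_neq0 lin) // mem_quotient.
have psiM : forall m1 m2, m1 \in N -> m2 \in N -> psi (m1 * m2) = (psi m1 + psi m2)%R.
  move=> m1 m2 N1 N2; apply: val_inj; rewrite cx_valD !psiV ?groupM //.
  by rewrite morphM ?(subsetP nKN) // (lin_charM lin) // mem_quotient.
have psiJ : forall m g, m \in N -> g \in G -> psi (m ^ g) = psi m.
  move=> m g Nm Gg; have cK : [~ m, g] \in K by exact: mem_commg.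
  have nm : m \in 'N(K) := subsetP nKN m Nm.
  have nc : [~ m, g] \in 'N(K) := subsetP (normG K) _ cK.
  by rewrite /psi conjg_mulR coset_kerr.
pose f (xy : gT * gT) := psi (xy.1 * xy.2^-1).
have hf : is_hom_on WN f.
  move=> [x1 y1] [x2 y2]; rewrite !memW => /and3P[Gx1 Gy1 N1] /and3P[Gx2 Gy2 N2].
  rewrite /f -[((x1, y1) * (x2, y2))]/(x1 * x2, y1 * y2) /=.
  have -> : x1 * x2 * (y1 * y2)^-1 = (x1 * y1^-1) * (x2 * y2^-1) ^ y1^-1.
    by rewrite conjgE invgK invMg !mulgA mulgKV.
  rewrite psiM ?psiJ ?groupV // memJ_norm // (subsetP nNG) // groupV //.
have [F [hF FW]] := ext f hf.
pose phi x := F (x, 1).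
have hphi : is_hom_on G phi.
  move=> x y Gx Gy; rewrite /phi.
  have -> : (x * y, 1) = (x, 1) * (y, 1) :> gT * gT by rewrite -[RHS]/(x * y, 1 * 1) mulg1.
  by rewrite hF // in_setX ?Gx ?Gy group1.
have := hom_der hphi G'n; rewrite /phi FW; last by rewrite memW invg1 mulg1 Nn group1 (subsetP sNG).
rewrite /f /= invg1 mulg1 => /(congr1 val); rewrite psiV // cx_val0 => e.
by rewrite e eqxx in chin.
Qed.

Lemma extW : extensible G WN <-> N :&: G^`(1) \subset [~: N, G].
Proof.
split; first by move=> [_ [_ ext]]; apply: E1; exact: ext _ Hyp_Cx.
by move=> sub; split; [exact: p1W | split; [exact: p2W | exact: E2 sub]].
Qed.
End WN.


Section Main.
Variables (gT : finGroupType) (G : {group gT}).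

Lemma fin_equiv (N M : {group gT}) : N \subset G -> M \subset G ->
  G \subset 'N(N) -> G \subset 'N(M) ->
  N :&: G^`(1) \subset [~: N, G] -> M :&: G^`(1) \subset [~: M, G] ->
  ((N <*> M) :&: G^`(1) \subset [~: N <*> M, G] <->
   (N <*> M) :&: G^`(1) = (N :&: G^`(1)) * (M :&: G^`(1))).
Proof.
move=> sN sM nN nM hN hM.
have eN : N :&: G^`(1) = [~: N, G].
  by apply/eqP; rewrite eqEsubset hN subsetI commg_subl nN derg1 commSg.
have eM : M :&: G^`(1) = [~: M, G].
  by apply/eqP; rewrite eqEsubset hM subsetI commg_subl nM derg1 commSg.
have nNM : G \subset 'N(N <*> M) by rewrite normsY.
have mNN : M \subset 'N(N) := subset_trans sM nN.
have eR : [~: N <*> M, G] = [~: N, G] * [~: M, G].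
  rewrite norm_joinEr // commMG //; apply: normsR; first exact: mNN.
  exact: subset_trans sM (normG G).
have sR : [~: N <*> M, G] \subset (N <*> M) :&: G^`(1).
  by rewrite subsetI commg_subl nNM derg1 commSg // join_subG sN sM.
rewrite eN eM -eR; split => [h|->]; last exact: subxx.
by apply/eqP; rewrite eqEsubset h sR.
Qed.

Lemma k1grp (U : {group (gT * gT)}) : group_set (k1 U).
Proof.
apply/group_setP; split; first by rewrite inE; exact: (group1 U).
move=> x y; rewrite !inE => Ux Uy.
have -> : (x * y, 1) = (x, 1) * (y, 1) :> gT * gT by rewrite -[RHS]/(x * y, 1 * 1) mulg1.
exact: groupM.
Qed.

Variables (U : {group (gT * gT)}) (sU : U \subset setX G G) (dU : diagG G \subset U).

Let N := Group (k1grp U).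

Lemma dg g : g \in G -> (g, g) \in U.
Proof. by move=> Gg; apply: (subsetP dU); apply/imsetP; exists g. Qed.

Lemma Wchar x y : ((x, y) \in U) = [&& x \in G, y \in G & x * y^-1 \in N].
Proof.
rewrite [_ \in N]inE; apply/idP/idP.
  move=> Uxy; have := subsetP sU _ Uxy; rewrite in_setX => /andP[Gx Gy]; rewrite Gx Gy /=.
  have -> : (x * y^-1, 1) = (x, y) * (y, y)^-1 :> gT * gT.
    by rewrite -[RHS]/(x * y^-1, y * y^-1) mulgV.
  by rewrite groupM ?groupV ?dg.
case/and3P => Gx Gy Nxy.
have -> : (x, y) = (x * y^-1, 1) * (y, y) :> gT * gT.
  by rewrite -[RHS]/(x * y^-1 * y, 1 * y) mulgKV mul1g.
by rewrite groupM ?dg.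
Qed.

Lemma sNG : N \subset G.
Proof.
apply/subsetP => n; rewrite inE => Un.
by have := subsetP sU _ Un; rewrite in_setX => /andP[].
Qed.

Lemma nNG : G \subset 'N(N).
Proof.
apply/subsetP => g Gg; rewrite inE; apply/subsetP => m; rewrite mem_conjg => Nm.
rewrite -(conjgKV g m); move: Nm; set n := m ^ g^-1; rewrite !inE => Un.
have -> : (n ^ g, 1) = (n, 1) ^ (g, g) :> gT * gT by rewrite -[RHS]/(n ^ g, 1 ^ g) conj1g.
by rewrite groupJ ?dg.
Qed.

Lemma Ueq : gval U = Wset G N.
Proof. by apply/setP => -[x y]; rewrite Wchar [RHS]inE. Qed.
End Main.

Lemma starpE (gT : finGroupType) (G N M : {group gT}) (U V : {group (gT * gT)}) :
  gval U = Wset G N -> gval V = Wset G M -> N \subset G -> M \subset G ->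
  G \subset 'N(N) -> G \subset 'N(M) -> starp U V = Wset G (N <*> M).
Proof.
move=> eU eV sN sM nN nM.
have p1U : p1 U = G by rewrite eU; exact: (p1W nN).
have p2U : p2 U = G by rewrite eU; exact: (p2W nN).
have p1V : p1 V = G by rewrite eV; exact: (p1W nM).
have p2V : p2 V = G by rewrite eV; exact: (p2W nM).
have eNM : N <*> M = N * M :> {set gT} by rewrite norm_joinEr // (subset_trans sM nN).
apply/setP => -[x y]; rewrite /starp inE in_setX p1U p2V p2U p1V setIid [RHS]inE /= eNM.
apply/andP/and3P.
  case=> [/andP[Gx Gy] /exists_inP[z Gz /andP[Uxz Vzy]]].
  move: Uxz Vzy; rewrite eU eV !inE /= => /and3P[_ _ Nxz] /and3P[_ _ Mzy].
  split => //; have -> : x * y^-1 = (x * z^-1) * (z * y^-1) by rewrite mulgA mulgKV.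
  exact: mem_mulg.
case=> Gx Gy /mulsgP[n m Nn Mm exy]; split; first by rewrite Gx Gy.
have Gn : n \in G := subsetP sN n Nn.
apply/exists_inP; exists (n^-1 * x); first by rewrite groupM ?groupV.
have e1 : x * (n^-1 * x)^-1 = n by rewrite invMg invgK mulgA mulgV mul1g.
have e2 : n^-1 * x * y^-1 = m by rewrite -mulgA exy mulKg.
by rewrite eU eV !inE /= e1 e2 Nn Mm Gx Gy groupM ?groupV.
Qed.

Theorem theorem5p6 (gT : finGroupType) (G : {group gT})
    (U V : {group (gT * gT)}) :
  U \subset setX G G -> V \subset setX G G ->
  diagG G \subset U -> diagG G \subset V ->
  extensible G U -> extensible G V ->
  (extensible G (starp U V) <->
     (k1 (starp U V) :&: G^`(1) = (k1 U :&: G^`(1)) * (k1 V :&: G^`(1)) /\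
      k2 (starp U V) :&: G^`(1) = (k2 U :&: G^`(1)) * (k2 V :&: G^`(1)))).
Proof.
move=> sU sV dU dV extU extV.
pose N := Group (k1grp U); pose M := Group (k1grp V).
have sN : N \subset G := sNG sU. have sM : M \subset G := sNG sV.
have nN : G \subset 'N(N) := nNG dU. have nM : G \subset 'N(M) := nNG dV.
have eU : gval U = Wset G N := Ueq sU dU.
have eV : gval V = Wset G M := Ueq sV dV.
have k1U : k1 U = N by rewrite eU; exact: (k1W sN nN).
have k2U : k2 U = N by rewrite eU; exact: (k2W sN nN).
have k1V : k1 V = M by rewrite eV; exact: (k1W sM nM).
have k2V : k2 V = M by rewrite eV; exact: (k2W sM nM).
have hN : N :&: G^`(1) \subset [~: N, G] by apply/(extW sN nN); move: extU; rewrite eU => h; exact: h.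
have hM : M :&: G^`(1) \subset [~: M, G] by apply/(extW sM nM); move: extV; rewrite eV => h; exact: h.
have sNM : N <*> M \subset G by rewrite join_subG sN sM.
have nNM : G \subset 'N(N <*> M) by rewrite normsY.
have eS := starpE eU eV sN sM nN nM.
have k1S : k1 (starp U V) = N <*> M by rewrite eS; exact: (k1W sNM nNM).
have k2S : k2 (starp U V) = N <*> M by rewrite eS; exact: (k2W sNM nNM).
rewrite k1S k2S k1U k2U k1V k2V eS.
have -> : extensible G (Wset G (N <*> M)) <-> (N <*> M) :&: G^`(1) \subset [~: N <*> M, G].
  exact: (extW sNM nNM).
rewrite (fin_equiv sN sM nN nM hN hM).
by split => [h|[h _]].
Qed.
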